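(* Let $K$ be a finite simplicial complex, $f$ an injective filtration function on $K$, $n$ a positive integer, and $\alpha$ an $n$-cycle whose class $[\alpha]\in H_n(K^f_a)$ is born at $a$ and terminated at a finite value $b>a$. Let $R_u=\min\{|f(\tau)-b|: \tau \text{ a birth } (n+1)\text{-simplex with } f(\tau)>b\}$ (or $\infty$ if there is no such $\tau$), and $R_l=\min\{|f(\tau)-b|: \tau \text{ a terminal } (n+1)\text{-simplex with } f(\tau)<b\}$ (or $\infty$ if there is no such $\tau$). Then $[\alpha]$ is $\varepsilon$-terminally-rigid for $\varepsilon=\frac12\min\{b-a,R_u,R_l\}$.
   Context: A filtration function on a finite simplicial complex $K$ is a map $f\colon K\to\mathbb{R}$ with $f(\sigma)\le f(\tau)$ whenever $\sigma$ is a face of $\tau$. Sublevel complexes are $K^f_r=f^{-1}((-\infty,r])$; homology is with coefficients in a fixed field. For a nontrivial class $[\alpha]\in H_n(K^f_r)$, its birth is the infimum of $q\le r$ such that $[\alpha]$ is in the image of $H_n(K^f_q)\to H_n(K^f_r)$, and its termination scale is the infimum of $q\ge r$ such that $[\alpha]$ maps to $0$ in $H_n(K^f_q)$. Since $f$ is injective, each simplex $\sigma$ is either a birth simplex (adding it creates a new nontrivial homology class, i.e. $\partial\sigma$ is already a boundary in the complex of simplices with smaller $f$-value) or a terminal simplex (adding it makes a nontrivial homology class trivial). $\|f-g\|_\infty=\max_{\sigma\in K}|f(\sigma)-g(\sigma)|$. For an injective filtration function $g$ with $\|f-g\|_\infty\le\varepsilon$, $\Delta_{g,\alpha}$ is the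 simplex $\tau$ such that $\alpha$ is a boundary in $K^g_{g(\tau)}$ but not in $K^g_r$ for $r<g(\tau)$; $\Sigma_\varepsilon$ is the set of all such $\Delta_{g,\alpha}$ over injective filtration functions $g$ with $\|f-g\|_\infty\le\varepsilon$. The class $[\alpha]$ is $\varepsilon$-terminally-rigid if $|\Sigma_\varepsilon|=1$. *)

(* Defs.v *)
From HB Require Import structures.
From mathcomp Require Import all_boot all_order all_algebra.
From mathcomp Require Import boolp reals constructive_ereal.
Set Implicit Arguments. Unset Strict Implicit. Unset Printing Implicit Defensive.
Import Order.TTheory GRing.Theory Num.Theory.
Local Open Scope ring_scope.

(* Abstract simplicial complex on the vertex set 'I_N: a simplex is a nonempty
   finite set of vertices; vertices are ordered by the order of 'I_N, which
   fixes the orientation of each simplex.  A d-simplex has d+1 vertices. *)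
Definition simplicial_complex (N : nat) (K : {set {set 'I_N}}) : Prop :=
  set0 \notin K /\
  forall s t : {set 'I_N}, s \in K -> t \subset s -> t != set0 -> t \in K.

(* Filtration function (only its values on K matter). *)
Definition filtration (R : realType) (N : nat) (K : {set {set 'I_N}})
  (f : {set 'I_N} -> R) : Prop :=
  forall s t, s \in K -> t \in K -> s \subset t -> f s <= f t.

Definition injective_filtration (R : realType) (N : nat) (K : {set {set 'I_N}})
  (f : {set 'I_N} -> R) : Prop :=
  filtration K f /\ {in K &, injective f}.

Definition sublevel (R : realType) (N : nat) (K : {set {set 'I_N}})
  (f : {set 'I_N} -> R) (r : R) : {set {set 'I_N}} :=
  [set s in K | f s <= r].

Definition chain (F : fieldType) (N : nat) := {ffun {set 'I_N} -> F}.

(* Incidence number [s : t]: if t is the facet of s obtained by removing the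
   vertex v, it is (-1)^(position of v in s). *)
Definition incidence (F : fieldType) (N : nat) (s t : {set 'I_N}) : F :=
  if t == set0 then 0 else
  \sum_(v in s | t == s :\ v) (-1) ^+ #|[set w in s | (w < v)%N]|.

Definition bd (F : fieldType) (N : nat) (c : chain F N) : chain F N :=
  [ffun t => \sum_(s : {set 'I_N}) c s * incidence F s t].

Definition is_chain_in (F : fieldType) (N : nat) (L : {set {set 'I_N}})
  (d : nat) (c : chain F N) : Prop :=
  forall s, c s != 0 -> s \in L /\ #|s| = d.+1.

Definition is_cycle_in (F : fieldType) (N : nat) (L : {set {set 'I_N}})
  (d : nat) (c : chain F N) : Prop :=
  is_chain_in L d c /\ bd c = 0.

Definition is_boundary_in (F : fieldType) (N : nat) (L : {set {set 'I_N}})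
  (d : nat) (c : chain F N) : Prop :=
  exists e : chain F N, is_chain_in L d.+1 e /\ bd e = c.

Definition elem (F : fieldType) (N : nat) (s : {set 'I_N}) : chain F N :=
  [ffun t => if t == s then 1 else 0].

Definition birth_simplex (F : fieldType) (R : realType) (N : nat)
  (K : {set {set 'I_N}}) (f : {set 'I_N} -> R) (s : {set 'I_N}) : Prop :=
  is_boundary_in [set t in K | f t < f s] (#|s|.-2) (bd (elem F s)).

Definition terminal_simplex (F : fieldType) (R : realType) (N : nat)
  (K : {set {set 'I_N}}) (f : {set 'I_N} -> R) (s : {set 'I_N}) : Prop :=
  ~ birth_simplex F K f s.

Definition is_inf (R : realType) (P : R -> Prop) (x : R) : Prop :=
  (forall y, P y -> x <= y) /\ (forall z, (forall y, P y -> z <= y) -> z <= x).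

Definition birth_is (F : fieldType) (R : realType) (N : nat)
  (K : {set {set 'I_N}}) (f : {set 'I_N} -> R) (n : nat) (alpha : chain F N)
  (r x : R) : Prop :=
  is_inf (fun q => q <= r /\ exists alpha' : chain F N,
            is_cycle_in (sublevel K f q) n alpha' /\
            is_boundary_in (sublevel K f r) n (alpha - alpha')) x.

Definition termination_is (F : fieldType) (R : realType) (N : nat)
  (K : {set {set 'I_N}}) (f : {set 'I_N} -> R) (n : nat) (alpha : chain F N)
  (r x : R) : Prop :=
  is_inf (fun q => r <= q /\ is_boundary_in (sublevel K f q) n alpha) x.

Definition is_Delta (F : fieldType) (R : realType) (N : nat)
  (K : {set {set 'I_N}}) (g : {set 'I_N} -> R) (n : nat) (alpha : chain F N)
  (tau : {set 'I_N}) : Prop :=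
  tau \in K /\ is_boundary_in (sublevel K g (g tau)) n alpha /\
  forall r, r < g tau -> ~ is_boundary_in (sublevel K g r) n alpha.

(* Sigma_eps, as a predicate on simplices; ||f - g||_oo <= eps is written out as max_{s in K} |f s - g s| <= eps. *)
Definition Sigma_eps (F : fieldType) (R : realType) (N : nat)
  (K : {set {set 'I_N}}) (f : {set 'I_N} -> R) (n : nat) (alpha : chain F N)
  (eps : R) : {set 'I_N} -> Prop :=
  fun tau => exists g : {set 'I_N} -> R,
     injective_filtration K g /\ (forall s, s \in K -> `|f s - g s| <= eps) /\
     is_Delta K g n alpha tau.

(* |Sigma_eps| = 1: Sigma_eps is exactly a singleton {tau0}. *)
Definition terminally_rigid (F : fieldType) (R : realType) (N : nat)
  (K : {set {set 'I_N}}) (f : {set 'I_N} -> R) (n : nat) (alpha : chain F N)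
  (eps : R) : Prop :=
  exists tau0, forall tau, Sigma_eps K f n alpha eps tau <-> tau = tau0.

Definition R_u (F : fieldType) (R : realType) (N : nat)
  (K : {set {set 'I_N}}) (f : {set 'I_N} -> R) (n : nat) (b : R) : \bar R :=
  \big[Order.min/+oo%E]_(t in K | [&& `[< birth_simplex F K f t >],
                                     #|t| == n.+2 & b < f t]) (`|f t - b|%:E).

Definition R_l (F : fieldType) (R : realType) (N : nat)
  (K : {set {set 'I_N}}) (f : {set 'I_N} -> R) (n : nat) (b : R) : \bar R :=
  \big[Order.min/+oo%E]_(t in K | [&& `[< terminal_simplex F K f t >],
                                     #|t| == n.+2 & f t < b]) (`|f t - b|%:E).

(* Main.v *)
Require Import Defs.
From HB Require Import structures.
From mathcomp Require Import all_boot all_order all_algebra.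
From mathcomp Require Import boolp reals constructive_ereal.
From mathcomp Require Import lra.
Import Order.TTheory GRing.Theory Num.Theory.
Local Open Scope ring_scope.

Lemma bd_elem (F : fieldType) N (s t : {set 'I_N}) :
  bd (elem F s) t = incidence F s t.
Proof.
rewrite ffunE (bigD1 s) //= big1 ?addr0 ?ffunE ?eqxx ?mul1r //.
by move=> u /negbTE hu; rewrite ffunE hu mul0r.
Qed.

Lemma bnd_mono (F : fieldType) N (L L' : {set {set 'I_N}}) d (c : chain F N) :
  (forall s, s \in L -> s \in L') -> is_boundary_in L d c -> is_boundary_in L' d c.
Proof.
move=> hL [e [he <-]]; exists e; split => // s /he [? ?]; split => //; exact: hL.
Qed.

Lemma bnd_elem (F : fieldType) N (L : {set {set 'I_N}}) d s :
  s \in L -> #|s| = d.+2 -> is_boundary_in L d (bd (elem F s)).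
Proof.
move=> hs hc; exists (elem F s); split => // t; rewrite ffunE.
by case: (eqVneq t s) => [-> | _]; rewrite ?eqxx.
Qed.

Lemma bnd_comb (F : fieldType) N (L' : {set {set 'I_N}}) d (e : chain F N) :
  (forall s, e s != 0 -> is_boundary_in L' d (bd (elem F s))) ->
  is_boundary_in L' d (bd e).
Proof.
move=> h.
have: forall s, exists e' : chain F N, e s != 0 ->
   is_chain_in L' d.+1 e' /\ bd e' = bd (elem F s).
  move=> s; case: (eqVneq (e s) 0) => [_|es]; first by exists 0.
  by have [e' he'] := h s es; exists e'.
case/choice => E hE.
exists [ffun t => \sum_s e s * E s t]; split.
  move=> t; case: (boolP ((t \in L') && (#|t| == d.+2))) => [/andP[? /eqP ?] //|H].
  rewrite ffunE big1 ?eqxx // => s _.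
  case: (eqVneq (e s) 0) => [->|es]; first by rewrite mul0r.
  have [HE _] := hE s es; case: (eqVneq (E s t) 0) => [->|/HE [h1 h2]]; first by rewrite mulr0.
  by move: H; rewrite h1 h2 eqxx.
apply/ffunP => u; rewrite !ffunE.
rewrite (eq_bigr (fun t => \sum_s e s * E s t * incidence F t u)); last first.
  by move=> t _; rewrite ffunE big_distrl.
rewrite exchange_big; apply: eq_bigr => s _ /=.
case: (eqVneq (e s) 0) => [->|es].
  by rewrite mul0r big1 // => t _; rewrite !mul0r.
rewrite -(bd_elem _ _ s u) -(proj2 (hE s es)) ffunE mulr_sumr.
by apply: eq_bigr => t _; rewrite mulrA.
Qed.

Lemma bigmin_le_gen d (T : orderType d) (I : eqType) (r : seq I) (P : pred I)
  (G : I -> T) idx x : x \in r -> P x ->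
  (\big[Order.min/idx]_(i <- r | P i) G i <= G x)%O.
Proof.
elim: r => // y r IH; rewrite inE big_cons => /orP[/eqP<-|xr] Px.
  by rewrite Px ge_min lexx.
case: (P y); last exact: IH.
by rewrite ge_min IH ?orbT.
Qed.

Lemma bigmin_ge_gen d (T : orderType d) (I : eqType) (r : seq I) (P : pred I)
  (G : I -> T) idx z : (forall i, P i -> (z <= G i)%O) -> (z <= idx)%O ->
  (z <= \big[Order.min/idx]_(i <- r | P i) G i)%O.
Proof.
move=> h hi; apply: (big_ind (fun v => (z <= v)%O)) => // x y hx hy; by rewrite le_min hx hy.
Qed.

Lemma delta_lemma (F : fieldType) (R : realType) (N : nat)
  (K : {set {set 'I_N}}) (f g : {set 'I_N} -> R) (n : nat)
  (alpha : chain F N) (tb : {set 'I_N}) (eps : R) :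
  tb \in K ->
  is_boundary_in (sublevel K f (f tb)) n alpha ->
  ~ is_boundary_in [set t in K | f t < f tb] n alpha ->
  {in K &, injective f} -> {in K &, injective g} ->
  (forall s, s \in K -> `|f s - g s| <= eps) ->
  (forall t, t \in K -> birth_simplex F K f t -> #|t| = n.+2 -> f tb < f t ->
     2 * eps <= f t - f tb) ->
  (forall t, t \in K -> terminal_simplex F K f t -> #|t| = n.+2 -> f t < f tb ->
     2 * eps <= f tb - f t) ->
  is_Delta K g n alpha tb.
Proof.
move=> tbK hb hnb finj ginj hfg hRu hRl.
have fg1 s : s \in K -> g s <= f s + eps.
  by move=> /hfg; rewrite ler_norml => /andP[h1 h2]; lra.
have fg2 s : s \in K -> f s <= g s + eps.
  by move=> /hfg; rewrite ler_norml => /andP[h1 h2]; lra.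
pose P := [set t in K | g t < g tb].
have step1 : forall k t, (#|[set s in K | (f s < f t)%R]| < k)%N -> t \in K ->
    #|t| = n.+2 -> f t < f tb -> is_boundary_in P n (bd (elem F t)).
  elim=> // k IH t hk tK tc ftb.
  have tnb : t != tb by apply/eqP => ett; move: ftb; rewrite ett ltxx.
  case: (lerP (f t) (f tb - 2 * eps)) => hft.
    apply: bnd_elem => //; rewrite inE tK /= lt_neqAle.
    have -> : (g t == g tb) = false.
      by apply/negbTE/eqP => /(ginj _ _ tK tbK) e1; move: tnb; rewrite e1 eqxx.
    have := fg1 t tK; have := fg2 tb tbK; move=> h1 h2 /=; lra.
  have hbirth : birth_simplex F K f t.
    apply: contrapT => hterm.
    have := hRl t tK hterm tc ftb; lra.
  move: hbirth; rewrite /birth_simplex tc /= => -[e [he <-]].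
  apply: bnd_comb => s /he [].
  rewrite inE => /andP[sK fst] sc.
  apply: IH => //; last by apply: lt_trans ftb.
  have hsub : [set s0 in K | f s0 < f s] \proper [set s0 in K | f s0 < f t].
    apply/properP; split.
      apply/subsetP => x; rewrite !inE => /andP[-> h] /=; exact: lt_trans h fst.
    by exists s; rewrite !inE ?sK ?fst ?ltxx.
  have := proper_card hsub; move: hk; rewrite ltnS => h1 h2.
  exact: leq_trans h2 h1.
have step1' : forall t, t \in K -> #|t| = n.+2 -> f t < f tb ->
    is_boundary_in P n (bd (elem F t)).
  by move=> t; apply: (step1 (#|[set s in K | f s < f t]|.+1)).
have step2 : ~ is_boundary_in P n alpha.
  move=> [e [he hea]].
  case: (boolP [exists s, (e s != 0) && (f tb < f s)]); last first.
    rewrite negb_exists => /forallP hall.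
    apply: hnb; exists e; split => // s es.
    have [] := he s es; rewrite inE => /andP[sK gs] sc; split => //.
    rewrite inE sK /=; have := hall s; rewrite es /= -leNgt le_eqVlt => /orP[/eqP efs|//].
    by move: gs; rewrite (finj _ _ sK tbK efs) ltxx.
  case/existsP => s0 hs0.
  case: (@arg_maxP _ _ _ s0 (fun s => (e s != 0) && (f tb < f s)) f hs0) => tau /andP[etau ftau] taumax.
  have [] := he tau etau; rewrite inE => /andP[tauK gtau] tauc.
  have tauT : ~ birth_simplex F K f tau.
    move=> hbt; have := hRu tau tauK hbt tauc ftau.
    have := fg1 tb tbK; have := fg2 tau tauK; lra.
  apply: tauT; rewrite /birth_simplex tauc /=.
  case: hb => e0 [he0 he0a].
  exists [ffun t => (e tau)^-1 * (e0 t - (if t == tau then 0 else e t))]; split.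
    move=> t; rewrite ffunE mulf_eq0 negb_or => /andP[_].
    case: (eqVneq (e0 t) 0) => [->|e0t].
      case: (eqVneq t tau) => [->|ttau]; first by rewrite subrr eqxx.
      rewrite sub0r oppr_eq0 => et.
      have [] := he t et; rewrite inE => /andP[tK _] tc; split => //.
      rewrite inE tK /=.
      case: (ltP (f tb) (f t)) => hft.
        have := taumax t; rewrite et hft => /(_ isT) htt; have : f t <= f tau := htt; rewrite le_eqVlt => /orP[/eqP|//].
        by move/(finj _ _ tK tauK) => e'; move: ttau; rewrite e' eqxx.
      exact: le_lt_trans hft ftau.
    move=> _; have [] := he0 t e0t; rewrite inE => /andP[tK ft] tc; split => //.
    by rewrite inE tK /=; apply: le_lt_trans ft ftau.
  apply/ffunP => u.
  have hA : alpha u = \sum_t e0 t * incidence F t u.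
    by rewrite -he0a ffunE.
  have hB : alpha u = \sum_t e t * incidence F t u.
    by rewrite -hea ffunE.
  rewrite bd_elem ffunE.
  under eq_bigr do rewrite ffunE -mulrA mulrBl.
  rewrite -mulr_sumr big_split /= sumrN -hA.
  rewrite hB (bigD1 tau) //= [X in _ - X](bigD1 tau) //= eqxx mul0r add0r.
  rewrite [X in _ - X](eq_bigr (fun t => e t * incidence F t u)); last first.
    by move=> t /negbTE ->.
  by rewrite addrK mulKf.
split => //; split.
  case: hb => e0 [he0 he0a]; rewrite -he0a; apply: bnd_comb => s /he0 [].
  rewrite /sublevel inE => /andP[sK fs] sc.
  case: (eqVneq s tb) => [est|stb].
    by rewrite -est; apply: bnd_elem => //; rewrite /sublevel inE sK est lexx.
  apply: (bnd_mono _ _ P); first by move=> x; rewrite /sublevel !inE => /andP[-> /ltW].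
  apply: step1' => //; rewrite lt_neqAle fs andbT.
  by apply/eqP => /(finj _ _ sK tbK) e'; move: stb; rewrite e' eqxx.
move=> r hr hbr; apply: step2; apply: bnd_mono hbr => x; rewrite /sublevel !inE.
by move=> /andP[-> h] /=; apply: le_lt_trans h hr.
Qed.

Lemma maxsupp (F : fieldType) (R : realType) (N : nat)
  (K : {set {set 'I_N}}) (f : {set 'I_N} -> R) (n : nat)
  (alpha : chain F N) (a : R) (L : {set {set 'I_N}}) :
  (forall s, s \in L -> s \in K) -> is_boundary_in L n alpha ->
  ~ is_boundary_in (sublevel K f a) n alpha ->
  exists s, s \in L /\ is_boundary_in (sublevel K f (f s)) n alpha.
Proof.
move=> hLK [e [he hea]] hna.
case: (boolP [exists s, e s != 0]); last first.
  rewrite negb_exists => /forallP hall; exfalso; apply: hna.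
  by exists e; split => // s; have := hall s; case: (e s != 0).
case/existsP => s0 hs0.
case: (@arg_maxP _ _ _ s0 (fun s => e s != 0) f hs0) => s es smax.
have [sL _] := he s es.
exists s; split => //; exists e; split => // t et.
have [tL tc] := he t et; split => //.
rewrite /sublevel inE hLK //=; exact: (smax t et).
Qed.

Arguments maxsupp {F R N K f n alpha a L}.
Arguments delta_lemma {F R N K f g n alpha tb eps}.

Theorem theorem3p6 (F : fieldType) (R : realType) (N : nat)
  (K : {set {set 'I_N}}) (f : {set 'I_N} -> R) (n : nat)
  (alpha : chain F N) (a b : R) :
  simplicial_complex K ->
  injective_filtration K f ->
  (0 < n)%N ->
  is_cycle_in (sublevel K f a) n alpha ->
  ~ is_boundary_in (sublevel K f a) n alpha ->
  birth_is K f n alpha a a ->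
  termination_is K f n alpha a b ->
  a < b ->
  terminally_rigid K f n alpha
    (fine (Order.min ((b - a)%:E) (Order.min (R_u F K f n b) (R_l F K f n b))) / 2).
Proof.
move=> _ hf _ _ hna _ [hQ1 hQ2] hab.
have finj := proj2 hf.
have subK : forall r s, s \in sublevel K f r -> s \in K.
  by move=> r s; rewrite /sublevel inE => /andP[].
pose D := [set s in K | `[< is_boundary_in (sublevel K f (f s)) n alpha >]].
have [q [hq1 hq2]] : exists q, a <= q /\ is_boundary_in (sublevel K f q) n alpha.
  apply: contrapT => hne.
  have := hQ2 (b + 1) (fun y hy => False_ind _ (hne (ex_intro _ y hy))); lra.
have [s0 [s0L hs0]] := maxsupp (subK q) hq2 hna.
have s0D : s0 \in D by rewrite inE (subK _ _ s0L); apply/asboolP.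
case: (@arg_minP _ _ _ s0 (fun s => s \in D) f s0D) => tb.
rewrite inE => /andP[tbK /asboolP hbt] tbmin.
have hatb : a <= f tb.
  case: (lerP a (f tb)) => // h; exfalso; apply: hna; apply: bnd_mono hbt => x.
  by rewrite /sublevel !inE => /andP[-> h'] /=; apply: le_trans h' (ltW h).
have eb : b = f tb.
  apply/le_anti/andP; split; first exact: hQ1.
  apply: hQ2 => y [hy1 hy2].
  have [s [sL hs]] := maxsupp (subK y) hy2 hna.
  have sD : s \in D by rewrite inE (subK _ _ sL); apply/asboolP.
  apply: le_trans (tbmin s sD) _.
  by move: sL; rewrite /sublevel inE => /andP[].
subst b.
have hnb : ~ is_boundary_in [set t in K | f t < f tb] n alpha.
  move=> hb'.
  have [s [sL hs]] : exists s, s \in [set t in K | f t < f tb] /\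
      is_boundary_in (sublevel K f (f s)) n alpha.
    by apply: maxsupp hb' hna => s; rewrite inE => /andP[].
  move: sL; rewrite inE => /andP[sK fs].
  have sD : s \in D by rewrite inE sK; apply/asboolP.
  by have := tbmin s sD; rewrite leNgt fs.
set Ru := R_u F K f n (f tb).
set Rl := R_l F K f n (f tb).
set M := Order.min _ _.
have Ru0 : (0 <= Ru)%E.
  rewrite /Ru /R_u; apply: bigmin_ge_gen; [by move=> i _; rewrite lee_fin normr_ge0 | exact: leey].
have Rl0 : (0 <= Rl)%E.
  rewrite /Rl /R_l; apply: bigmin_ge_gen; [by move=> i _; rewrite lee_fin normr_ge0 | exact: leey].
have M0 : (0 <= M)%E.
  by rewrite /M !le_min Ru0 Rl0 lee_fin subr_ge0 (ltW hab).
have Mfin : M \is a fin_num.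
  rewrite ge0_fin_numE //; apply: (@le_lt_trans _ _ ((f tb - a)%:E)).
    by rewrite /M ge_min lexx.
  exact: ltey.
set m := fine M.
have hmE : m%:E = M by rewrite /m fineK.
have m0 : 0 <= m by rewrite -lee_fin hmE.
have hRu : forall t, t \in K -> birth_simplex F K f t -> #|t| = n.+2 ->
    f tb < f t -> 2 * (m / 2) <= f t - f tb.
  move=> t tK tb' tc ft.
  have : (M <= `|f t - f tb|%:E)%E.
    apply: (@le_trans _ _ Ru); first by rewrite /M !ge_min lexx !orbT.
    rewrite /Ru /R_u; apply: bigmin_le_gen; first exact: mem_index_enum.
    by rewrite tK /= tc eqxx ft andbT andbT; apply/asboolP.
  rewrite -hmE lee_fin gtr0_norm ?subr_gt0 //; lra.
have hRl : forall t, t \in K -> terminal_simplex F K f t -> #|t| = n.+2 ->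
    f t < f tb -> 2 * (m / 2) <= f tb - f t.
  move=> t tK tb' tc ft.
  have : (M <= `|f t - f tb|%:E)%E.
    apply: (@le_trans _ _ Rl); first by rewrite /M !ge_min lexx !orbT.
    rewrite /Rl /R_l; apply: bigmin_le_gen; first exact: mem_index_enum.
    by rewrite tK /= tc eqxx ft andbT andbT; apply/asboolP.
  rewrite -hmE lee_fin ltr0_norm ?subr_lt0 //; lra.
exists tb => tau; split.
  move=> [g [[_ ginj] [hfg hD]]].
  have hDtb := delta_lemma tbK hbt hnb finj ginj hfg hRu hRl.
  case: hD => tauK [hbtau hntau].
  case: hDtb => _ [hbtb hntb].
  case: (ltgtP (g tau) (g tb)) => h.
  - by exfalso; apply: hntb h hbtau.
  - by exfalso; apply: hntau h hbtb.
  - exact: ginj.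
have hff : forall s, s \in K -> `|f s - f s| <= m / 2.
  by move=> s _; rewrite subrr normr0 divr_ge0.
move=> ->; exists f; split => //; split => //.
exact: (delta_lemma tbK hbt hnb finj finj hff hRu hRl).
Qed.
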